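(* Let $$\Omega=\{(\chi,\zeta,\xi):\ 0.454<\chi\le 0.45537,\ 0\le\zeta\le \tfrac12-\chi,\ 0\le\xi\le 1-2\chi-2\zeta\},$$ let $$f(\chi,\zeta)=\frac{3^{\frac12-4\chi+2\zeta}(1-2\chi-2\zeta)^{1-2\chi-2\zeta}(1-2\chi+4\zeta)^{1-2\chi+4\zeta}(6\chi-\frac32+3\zeta)^{6\chi-\frac32+3\zeta}(6\chi-\frac32-9\zeta)^{6\chi-\frac32-9\zeta}}{(2\chi+\zeta-\frac12)^{2\chi+\zeta-\frac12}\,2^{1-2\chi+\zeta}\,(\frac12-\chi-\zeta)^{\frac12-\chi-\zeta}\,(\frac12-\chi+2\zeta)^{\frac12-\chi+2\zeta}\,(2\chi-3\zeta-\frac12)^{2\chi-3\zeta-\frac12}},$$ $$g(\chi,\zeta,\xi)=\frac{2^{2\xi}\,(1/1.618)^{\xi}}{\xi^{\xi}\,(1-2\chi-2\zeta-\xi)^{1-2\chi-2\zeta-\xi}\,(1-2\chi+4\zeta-\xi)^{1-2\chi+4\zeta-\xi}\,(-\frac72+10\chi-5\zeta+\xi)^{-\frac72+10\chi-5\zeta+\xi}},$$ and $h=f\cdot g$ (with the convention $0^0=1$). Then, uniformly over positive even integers $n$ and integers $x$ with $0.454n<x\le 0.45537n$, $$\frac{q(x,n)}{(3n-1)!!}=O(n^6)\cdot\sup\{h(\chi,\zeta,\xi)^n:(\chi,\zeta,\xi)\in\Omega\},$$ where $q(x,n)$ is the quantity below.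
   Context: $q(x,n):=\sum_{i=0}^{\frac n2-x}\binom{n}{\frac n2-i}\frac{(\frac n2-i)!\,3^{n-2x-2i}}{(2x+i-\frac n2)!\,2^{\frac n2-x-i}(\frac n2-x-i)!}\cdot\frac{(\frac n2+i)!\,3^{n-2x+4i}}{(2x-3i-\frac n2)!\,2^{\frac n2-x+2i}(\frac n2-x+2i)!}\cdot\sum_{j=0}^{n-2i-2x}\binom{n-2i-2x}{j}\binom{n-2x+4i}{j}2^{2j}j!\left(\frac1{1.618}\right)^j\frac{(3(2x-\frac n2-3i))!\,(3(2x-\frac n2+i))!}{(3(2x-\frac n2-3i)-2(n-2i-2x)+j)!}$. Here $(3n-1)!!=(3n-1)(3n-3)\cdots 1$. *)

(* Defs.v *)
From Stdlib Require Import Reals ZArith Lra Lia.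
Open Scope R_scope.

(* factorial of an integer argument (all arguments used are >= 0 in the
   range of the theorem) *)
Definition factZ (z : Z) : R := INR (fact (Z.to_nat z)).
Definition binomZ (a b : Z) : R := C (Z.to_nat a) (Z.to_nat b).
Definition powZ (b : R) (e : Z) : R := b ^ (Z.to_nat e).

Fixpoint dfact (k : nat) : nat :=
  match k with
  | O => 1%nat
  | S O => 1%nat
  | S (S k' as _) => (k * dfact k')%nat
  end.

Definition phi_inv : R := 1 / (1618 / 1000).

Definition q (x n : Z) : R :=
  let h := (n / 2)%Z in
  sum_f_R0 (fun i0 : nat =>
    let i := Z.of_nat i0 in
    binomZ n (h - i) *
    (factZ (h - i) * powZ 3 (n - 2*x - 2*i)
      / (factZ (2*x + i - h) * powZ 2 (h - x - i) * factZ (h - x - i))) *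
    (factZ (h + i) * powZ 3 (n - 2*x + 4*i)
      / (factZ (2*x - 3*i - h) * powZ 2 (h - x + 2*i) * factZ (h - x + 2*i))) *
    sum_f_R0 (fun j0 : nat =>
      let j := Z.of_nat j0 in
      binomZ (n - 2*i - 2*x) j * binomZ (n - 2*x + 4*i) j *
      powZ 2 (2*j) * factZ j * powZ phi_inv j *
      (factZ (3*(2*x - h - 3*i)) * factZ (3*(2*x - h + i))
        / factZ (3*(2*x - h - 3*i) - 2*(n - 2*i - 2*x) + j)))
      (Z.to_nat (n - 2*i - 2*x)))
    (Z.to_nat (h - x)).

(* t^t with the convention 0^0 = 1 (only used for t >= 0) *)
Definition selfpow (t : R) : R := if Rle_dec t 0 then 1 else Rpower t t.

Definition f_fun (chi zeta : R) : R :=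
  Rpower 3 (1/2 - 4*chi + 2*zeta)
  * selfpow (1 - 2*chi - 2*zeta) * selfpow (1 - 2*chi + 4*zeta)
  * selfpow (6*chi - 3/2 + 3*zeta) * selfpow (6*chi - 3/2 - 9*zeta)
  / ( selfpow (2*chi + zeta - 1/2) * Rpower 2 (1 - 2*chi + zeta)
      * selfpow (1/2 - chi - zeta) * selfpow (1/2 - chi + 2*zeta)
      * selfpow (2*chi - 3*zeta - 1/2) ).

Definition g_fun (chi zeta xi : R) : R :=
  Rpower 2 (2*xi) * Rpower phi_inv xi
  / ( selfpow xi * selfpow (1 - 2*chi - 2*zeta - xi)
      * selfpow (1 - 2*chi + 4*zeta - xi)
      * selfpow (-(7/2) + 10*chi - 5*zeta + xi) ).

Definition h_fun (chi zeta xi : R) : R := f_fun chi zeta * g_fun chi zeta xi.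

Definition in_Omega (chi zeta xi : R) : Prop :=
  454/1000 < chi <= 45537/100000 /\
  0 <= zeta <= 1/2 - chi /\
  0 <= xi <= 1 - 2*chi - 2*zeta.

Definition hpow_set (n : nat) (v : R) : Prop :=
  exists chi zeta xi, in_Omega chi zeta xi /\ v = (h_fun chi zeta xi) ^ n.

(* Main.v *)
Require Import Defs.
From Stdlib Require Import Reals ZArith Arith Lra Lia.
From Coquelicot Require Coquelicot.
Open Scope R_scope.
Lemma exp_le_exp x y : x <= y -> exp x <= exp y.
Proof. intros [H|H]; [left; apply exp_increasing; auto| subst; lra]. Qed.
Lemma ln_le x y : 0 < x -> x <= y -> ln x <= ln y.
Proof. intros H [H1|H1]; [left; apply ln_increasing; auto | subst; lra]. Qed.
Module PhiM.
Import Coquelicot.Coquelicot.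

Lemma phi_nonneg y : 0 <= y -> (1 - y) * exp y <= (1 + y) * exp (- y).
Proof.
  intros Hy.
  set (f := fun t => (1 + t) * exp (- t) - (1 - t) * exp t).
  assert (Hd : forall c, Rabs (c - 0) <= y -> is_derive f c (c * (exp c - exp (- c)))).
  { intros c _. unfold f. auto_derive; [exact I|]. ring. }
  destruct (MVT_cor4 f (fun c => c * (exp c - exp (- c))) 0 y Hd y) as [c [Hc Hc2]].
  { rewrite Rminus_0_r, Rabs_pos_eq; lra. }
  assert (H0 : f 0 = 0) by (unfold f; rewrite Ropp_0, exp_0; ring).
  assert (Hpos : 0 <= c * (exp c - exp (- c))).
  { destruct (Rle_lt_dec 0 c).
    - apply Rmult_le_pos; auto. assert (exp (-c) <= exp c) by (apply exp_le_exp; lra). lra.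
    - assert (exp c <= exp (-c)) by (apply exp_le_exp; lra).
      replace (c * (exp c - exp (- c))) with ((-c) * (exp (-c) - exp c)) by ring.
      apply Rmult_le_pos; lra. }
  assert (0 <= f y).
  { rewrite H0 in Hc. assert (0 <= c * (exp c - exp (- c)) * (y - 0)) by (apply Rmult_le_pos; lra). lra. }
  unfold f in H. lra.
Qed.

End PhiM.
Import PhiM.
Lemma ln_key y : 0 <= y < 1 -> 2 * y <= ln ((1 + y) / (1 - y)).
Proof.
  intros Hy. pose proof (phi_nonneg y (proj1 Hy)) as H.
  assert (H2 : exp (2 * y) <= (1 + y) / (1 - y)).
  { apply Rmult_le_reg_r with (1 - y); [lra|].
    unfold Rdiv; rewrite Rmult_assoc, Rinv_l by lra. rewrite Rmult_1_r.
    replace (2 * y) with (y + y) by ring. rewrite exp_plus.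
    apply Rmult_le_reg_r with (exp (- y)); [apply exp_pos|].
    replace (exp y * exp y * (1 - y) * exp (- y)) with ((1 - y) * exp y * (exp y * exp (-y))) by ring.
    rewrite <- exp_plus. replace (y + - y) with 0 by ring. rewrite exp_0. lra. }
  rewrite <- (ln_exp (2 * y)). apply ln_le; [apply exp_pos | exact H2].
Qed.

Definition Lf (m : nat) : R := ln (INR (fact m)).
Definition xl (r : R) : R := if Rle_dec r 0 then 0 else r * ln r.

Lemma fact_pos_R m : 0 < INR (fact m).
Proof. apply lt_0_INR. apply lt_O_fact. Qed.

Lemma Lf_S m : Lf (S m) = ln (INR (S m)) + Lf m.
Proof. unfold Lf. rewrite fact_simpl, mult_INR, ln_mult; auto.
  apply lt_0_INR; lia. apply fact_pos_R. Qed.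

Lemma ln_ratio m : (1 <= m)%nat -> ln (INR (S m)) = ln (INR m) + ln ((1 + /(2*INR m+1)) / (1 - /(2*INR m+1))).
Proof.
  intros Hm. assert (1 <= INR m) by (apply (le_INR 1); lia).
  rewrite <- ln_mult. f_equal. rewrite S_INR. field. split; lra. lra.
  assert (0 < /(2*INR m+1) < 1). { split. apply Rinv_0_lt_compat; lra.
    rewrite <- Rinv_1. apply Rinv_lt_contravar; lra. }
  apply Rdiv_lt_0_compat; lra.
Qed.

Lemma stir_up_aux m : (1 <= m)%nat -> Lf m <= (INR m + /2) * ln (INR m) - INR m + 1.
Proof.
  induction m as [|m IH]; intros Hm; [lia|].
  destruct (Nat.eq_dec m 0) as [->|Hm0].
  - unfold Lf; simpl. rewrite ln_1. lra.
  - specialize (IH ltac:(lia)). rewrite Lf_S. rewrite (ln_ratio m) by lia.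
    assert (1 <= INR m) by (apply (le_INR 1); lia).
    set (y := /(2*INR m+1)).
    assert (Hy : 0 <= y < 1). { unfold y; split. left; apply Rinv_0_lt_compat; lra.
      rewrite <- Rinv_1. apply Rinv_lt_contravar; lra. }
    pose proof (ln_key y Hy).
    assert (Hyy : (INR m + /2) * (2 * y) = 1) by (unfold y; field; lra).
    set (L := ln ((1 + y) / (1 - y))) in *.
    assert (0 <= ln (INR m)) by (rewrite <- ln_1; apply ln_le; lra).
    rewrite S_INR.
    assert (0 <= L) by lra.
    assert ((INR m + /2) * L >= 1).
    { rewrite <- Hyy. apply Rle_ge, Rmult_le_compat_l; lra. }
    nra.
Qed.

Lemma stir_low m : INR m * ln (INR m) - INR m <= Lf m.
Proof.
  induction m as [|m IH].
  - simpl. unfold Lf; simpl. rewrite ln_1. lra.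
  - destruct (Nat.eq_dec m 0) as [->|Hm0].
    + unfold Lf; simpl. rewrite ln_1. lra.
    + rewrite Lf_S. assert (1 <= INR m) by (apply (le_INR 1); lia).
      assert (Hl : ln (INR (S m)) <= ln (INR m) + / INR m).
      { rewrite S_INR. replace (INR m + 1) with (INR m * (1 + / INR m)) by (field; lra).
        rewrite ln_mult by (try apply Rplus_lt_0_compat; try apply Rinv_0_lt_compat; lra).
        assert (ln (1 + / INR m) <= / INR m).
        { rewrite <- (ln_exp (/ INR m)) at 2. apply ln_le.
          assert (0 < / INR m) by (apply Rinv_0_lt_compat; lra). lra.
          assert (0 < / INR m) by (apply Rinv_0_lt_compat; lra).
          pose proof (exp_ineq1_le (/ INR m)). lra. }
        lra. }
      assert (0 <= ln (INR (S m))) by (rewrite <- ln_1; apply ln_le; [lra| rewrite S_INR; lra]).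
      assert (INR m * / INR m = 1) by (field; lra).
      rewrite S_INR in *. nra.
Qed.

Lemma ln_div x y : 0 < x -> 0 < y -> ln (x / y) = ln x - ln y.
Proof. intros. unfold Rdiv. rewrite ln_mult, ln_Rinv; try apply Rinv_0_lt_compat; auto. Qed.

Lemma stir_up m : Lf m <= xl (INR m) - INR m + 1 + ln (INR m + 1) / 2.
Proof.
  destruct m as [|m].
  - unfold Lf, xl; simpl. rewrite ln_1. destruct (Rle_dec 0 0); [|lra].
    replace (0+1) with 1 by ring. rewrite ln_1. lra.
  - pose proof (stir_up_aux (S m) ltac:(lia)).
    assert (1 <= INR (S m)) by (apply (le_INR 1); lia).
    assert (ln (INR (S m)) <= ln (INR (S m) + 1)) by (apply ln_le; lra).
    unfold xl. destruct (Rle_dec (INR (S m)) 0); [lra|]. lra.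
Qed.

Lemma stir_low' m : xl (INR m) - INR m <= Lf m.
Proof.
  pose proof (stir_low m). unfold xl. destruct (Rle_dec (INR m) 0).
  - assert (INR m = 0) by (pose proof (pos_INR m); lra). unfold Lf.
    destruct m; [simpl; rewrite ln_1; lra|]. rewrite S_INR in H0; pose proof (pos_INR m); lra.
  - lra.
Qed.

Definition Lz (z : Z) : R := ln (factZ z).

Lemma INR_toZ z : (0 <= z)%Z -> INR (Z.to_nat z) = IZR z.
Proof. intros. rewrite INR_IZR_INZ, Z2Nat.id; auto. Qed.

Lemma stirZ_low z : (0 <= z)%Z -> xl (IZR z) - IZR z <= Lz z.
Proof. intros. unfold Lz, factZ. rewrite <- INR_toZ by auto. apply stir_low'. Qed.

Lemma stirZ_up z n : (0 <= z)%Z -> (z + 1 <= 4 * n)%Z ->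
  Lz z <= xl (IZR z) - IZR z + 1 + (ln 4 + ln (IZR n)) / 2.
Proof.
  intros H1 H2. unfold Lz, factZ. pose proof (stir_up (Z.to_nat z)).
  rewrite INR_toZ in * by auto.
  apply IZR_le in H2. rewrite plus_IZR, mult_IZR in H2.
  assert (0 <= IZR z) by (apply IZR_le; auto).
  assert (ln (IZR z + 1) <= ln (4 * IZR n)) by (apply ln_le; simpl in *; lra).
  assert (ln (IZR z + 1) <= ln (4 * IZR n)) by (apply ln_le; simpl in *; lra).
  rewrite ln_mult in H3 by (simpl in *; lra). unfold Lf in H. lra.
Qed.

Lemma factZ_pos z : 0 < factZ z.
Proof. apply fact_pos_R. Qed.

Lemma powZ_pos b e : 0 < b -> 0 < powZ b e.
Proof. intros; unfold powZ; apply pow_lt; auto. Qed.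

Lemma binomZ_pos a b : 0 < binomZ a b.
Proof. unfold binomZ, C. apply Rdiv_lt_0_compat; [apply fact_pos_R|apply Rmult_lt_0_compat; apply fact_pos_R]. Qed.

Lemma powZ_ln b e : 0 < b -> (0 <= e)%Z -> ln (powZ b e) = IZR e * ln b.
Proof. intros. unfold powZ. rewrite ln_pow by auto. rewrite INR_toZ; auto. Qed.

Lemma binomZ_ln a b c : (0 <= b)%Z -> (0 <= c)%Z -> a = (b + c)%Z ->
  ln (binomZ a b) = Lz a - Lz b - Lz c.
Proof.
  intros Hb Hc ->. unfold binomZ, C, Lz, factZ.
  replace (Z.to_nat (b + c) - Z.to_nat b)%nat with (Z.to_nat c) by lia.
  rewrite ln_div, ln_mult; try apply fact_pos_R; try (apply Rmult_lt_0_compat; apply fact_pos_R). ring.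
Qed.

Lemma selfpow_pos t : 0 < selfpow t.
Proof. unfold selfpow. destruct (Rle_dec t 0); [lra| unfold Rpower; apply exp_pos]. Qed.

Lemma Rpower_pos b e : 0 < Rpower b e.
Proof. unfold Rpower; apply exp_pos. Qed.

Lemma selfpow_n N r : 0 < N -> 0 <= r -> N * ln (selfpow (r / N)) = xl r - r * ln N.
Proof.
  intros HN Hr. unfold selfpow, xl. destruct (Rle_dec (r / N) 0).
  - assert (r = 0).
    { destruct Hr as [Hr|]; auto. assert (0 < r / N) by (apply Rdiv_lt_0_compat; auto). lra. }
    subst. destruct (Rle_dec 0 0); [|lra]. rewrite ln_1. ring.
  - destruct (Rle_dec r 0).
    + assert (r = 0) by lra. subst. exfalso. apply n. unfold Rdiv. lra.
    + rewrite ln_Rpower, ln_div by lra. field. lra.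
Qed.

Lemma dfact_odd k : (dfact (2*k+1) * 2^(k+1) * fact (k+1) = fact (2*k+2))%nat.
Proof.
  induction k as [|k IH]; [reflexivity|].
  replace (2 * S k + 1)%nat with (S (S (2*k+1))) by lia.
  change (dfact (S (S (2*k+1)))) with (S (S (2*k+1)) * dfact (2*k+1))%nat.
  replace (S k + 1)%nat with (S (k+1)) by lia.
  replace (2 * S k + 2)%nat with (S (S (2*k+2))) by lia.
  rewrite Nat.pow_succ_r', !fact_simpl, <- IH. 
  ring.
Qed.

Lemma dfact_Z n hh : n = (2*hh)%Z -> (1 <= hh)%Z ->
  INR (dfact (3 * Z.to_nat n - 1)) = factZ (3*n) / (powZ 2 (3*hh) * factZ (3*hh)).
Proof.
  intros Hn Hh. set (k := (Z.to_nat (3*hh) - 1)%nat).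
  pose proof (dfact_odd k) as E.
  replace (3 * Z.to_nat n - 1)%nat with (2*k+1)%nat by (unfold k; lia).
  unfold factZ, powZ.
  replace (Z.to_nat (3*n)) with (2*k+2)%nat by (unfold k; lia).
  replace (Z.to_nat (3*hh)) with (k+1)%nat by (unfold k; lia).
  rewrite <- E. rewrite !mult_INR, pow_INR. simpl (INR 2).
  replace (1+1) with 2 by ring.
  pose proof (fact_pos_R (k+1)). assert (0 < 2 ^ (k+1)) by (apply pow_lt; lra).
  field. split; lra.
Qed.

Definition termA (h x n i : Z) : R :=
    binomZ n (h - i) *
    (factZ (h - i) * powZ 3 (n - 2*x - 2*i)
      / (factZ (2*x + i - h) * powZ 2 (h - x - i) * factZ (h - x - i))) *
    (factZ (h + i) * powZ 3 (n - 2*x + 4*i)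
      / (factZ (2*x - 3*i - h) * powZ 2 (h - x + 2*i) * factZ (h - x + 2*i))).

Definition termB (h x n i j : Z) : R :=
      binomZ (n - 2*i - 2*x) j * binomZ (n - 2*x + 4*i) j *
      powZ 2 (2*j) * factZ j * powZ phi_inv j *
      (factZ (3*(2*x - h - 3*i)) * factZ (3*(2*x - h + i))
        / factZ (3*(2*x - h - 3*i) - 2*(n - 2*i - 2*x) + j)).

Lemma q_eq x n : q x n = sum_f_R0 (fun i0 => termA (n/2) x n (Z.of_nat i0) *
   sum_f_R0 (fun j0 => termB (n/2) x n (Z.of_nat i0) (Z.of_nat j0)) (Z.to_nat (n - 2*Z.of_nat i0 - 2*x)))
   (Z.to_nat (n/2 - x)).
Proof. reflexivity. Qed.

Lemma sp_fact N m e : 0 < N -> (0 <= m)%Z -> e = IZR m / N ->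
  N * ln (selfpow e) = xl (IZR m) - IZR m * ln N.
Proof. intros HN Hm ->. apply selfpow_n; auto. apply IZR_le; auto. Qed.

Lemma ln_le_inv a b : 0 < a -> 0 < b -> ln a <= ln b -> a <= b.
Proof. intros Ha Hb [H|H]; [left; apply ln_lt_inv; auto | right; apply ln_inv; auto]. Qed.

Lemma phi_pos : 0 < phi_inv.
Proof. unfold phi_inv. apply Rdiv_lt_0_compat; lra. Qed.

Ltac pos := repeat first [ apply factZ_pos
  | apply binomZ_pos | apply powZ_pos | apply selfpow_pos | apply Rpower_pos | apply phi_pos
  | apply exp_pos | apply Rdiv_lt_0_compat | apply Rinv_0_lt_compat | apply Rmult_lt_0_compat | apply pow_lt | lra ].

Ltac lnsplit := repeat first [ rewrite ln_mult by pos | rewrite ln_div by pos ].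

Lemma termA_ln hh x n i : n = (2*hh)%Z -> (4*hh < 5*x)%Z -> (x < hh)%Z -> (0 <= i <= hh - x)%Z ->
  ln (termA hh x n i) = Lz n - Lz (hh - i) - Lz (hh + i) + Lz (hh - i) + IZR (n - 2*x - 2*i) * ln 3
   - Lz (2*x + i - hh) - IZR (hh - x - i) * ln 2 - Lz (hh - x - i)
   + Lz (hh + i) + IZR (n - 2*x + 4*i) * ln 3 - Lz (2*x - 3*i - hh) - IZR (hh - x + 2*i) * ln 2
   - Lz (hh - x + 2*i).
Proof.
  intros Hn H1 H2 Hi. unfold termA. lnsplit.
  rewrite (binomZ_ln n (hh - i) (hh + i)) by lia.
  rewrite !powZ_ln by (lra || lia). unfold Lz. ring.
Qed.

Lemma termB_ln hh x n i j : n = (2*hh)%Z -> (4*hh < 5*x)%Z -> (x < hh)%Z -> (0 <= i <= hh - x)%Z ->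
  (0 <= j <= n - 2*i - 2*x)%Z ->
  ln (termB hh x n i j) = (Lz (n - 2*i - 2*x) - Lz j - Lz (n - 2*i - 2*x - j))
   + (Lz (n - 2*x + 4*i) - Lz j - Lz (n - 2*x + 4*i - j)) + IZR (2*j) * ln 2 + Lz j
   + IZR j * ln phi_inv + Lz (3*(2*x - hh - 3*i)) + Lz (3*(2*x - hh + i))
   - Lz (3*(2*x - hh - 3*i) - 2*(n - 2*i - 2*x) + j).
Proof.
  intros Hn H1 H2 Hi Hj. unfold termB. lnsplit.
  rewrite (binomZ_ln (n - 2*i - 2*x) j (n - 2*i - 2*x - j)) by lia.
  rewrite (binomZ_ln (n - 2*x + 4*i) j (n - 2*x + 4*i - j)) by lia.
  rewrite !powZ_ln by (try apply phi_pos; lra || lia). unfold Lz. ring.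
Qed.

Ltac izr := repeat first [rewrite plus_IZR | rewrite minus_IZR | rewrite mult_IZR | rewrite opp_IZR].
Ltac izrall := repeat first [rewrite plus_IZR in * | rewrite minus_IZR in * | rewrite mult_IZR in * | rewrite opp_IZR in *].
Ltac eqt chi zeta xi HN2 := unfold chi, zeta, xi; izr; rewrite ?HN2; field; lra.

Lemma term_bound hh x n i j : n = (2*hh)%Z -> (1 <= hh)%Z -> (4*hh < 5*x)%Z -> (x < hh)%Z ->
  (0 <= i <= hh - x)%Z -> (0 <= j <= n - 2*i - 2*x)%Z ->
  termA hh x n i * termB hh x n i j / (factZ (3*n) / (powZ 2 (3*hh) * factZ (3*hh)))
  <= 64 * exp 6 * IZR n ^ 3 * h_fun (IZR x / IZR n) (IZR i / IZR n) (IZR j / IZR n) ^ Z.to_nat n.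
Proof.
  intros Hn Hh H1 H2 Hi Hj.
  assert (HN2 : IZR n = 2 * IZR hh) by (rewrite Hn, mult_IZR; reflexivity).
  assert (HH : 1 <= IZR hh) by (apply IZR_le; auto).
  assert (HN : 0 < IZR n) by lra.
  assert (Hhv : 0 < h_fun (IZR x / IZR n) (IZR i / IZR n) (IZR j / IZR n)).
  { unfold h_fun, f_fun, g_fun. pos. }
  apply ln_le_inv.
  { apply Rdiv_lt_0_compat. apply Rmult_lt_0_compat.
    unfold termA; pos. unfold termB; pos. pos. }
  { pos. }
  set (chi := IZR x / IZR n). set (zeta := IZR i / IZR n). set (xi := IZR j / IZR n).
  set (hv := h_fun chi zeta xi) in *.
  rewrite ln_div by (try (apply Rmult_lt_0_compat; [unfold termA; pos | unfold termB; pos]); pos).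
  rewrite ln_mult by (unfold termA, termB; pos).
  rewrite termA_ln, termB_ln by auto.
  rewrite ln_div, ln_mult, powZ_ln by (pos || lia).
  rewrite ln_mult, ln_mult, ln_mult, ln_exp, ln_pow, <- Rpower_pow, ln_Rpower, INR_toZ by (pos || lia).
  assert (Eh : ln hv = ln (f_fun chi zeta) + ln (g_fun chi zeta xi)).
  { unfold hv, h_fun. rewrite ln_mult; pos. }
  rewrite Eh.
  unfold f_fun, g_fun. lnsplit.

  assert (Hh0 : IZR hh <> 0) by lra.
  assert (F1 : IZR n * ln (selfpow (1 - 2 * chi - 2 * zeta)) = xl (IZR (n - 2*i - 2*x)) - IZR (n - 2*i - 2*x) * ln (IZR n))
    by (apply sp_fact; [lra | lia | unfold chi, zeta, xi; rewrite ?plus_IZR, ?minus_IZR, ?mult_IZR, ?opp_IZR; rewrite ?HN2; field; lra]).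
  assert (F2 : IZR n * ln (selfpow (1 - 2 * chi + 4 * zeta)) = xl (IZR (n - 2*x + 4*i)) - IZR (n - 2*x + 4*i) * ln (IZR n))
    by (apply sp_fact; [lra | lia | eqt chi zeta xi HN2]).
  assert (F3 : IZR n * ln (selfpow (6 * chi - 3 / 2 + 3 * zeta)) = xl (IZR (3 * (2 * x - hh + i))) - IZR (3 * (2 * x - hh + i)) * ln (IZR n))
    by (apply sp_fact; [lra | lia | eqt chi zeta xi HN2]).
  assert (F4 : IZR n * ln (selfpow (6 * chi - 3 / 2 - 9 * zeta)) = xl (IZR (3 * (2 * x - hh - 3 * i))) - IZR (3 * (2 * x - hh - 3 * i)) * ln (IZR n))
    by (apply sp_fact; [lra | lia | eqt chi zeta xi HN2]).
  assert (F5 : IZR n * ln (selfpow (2 * chi + zeta - 1 / 2)) = xl (IZR (2 * x + i - hh)) - IZR (2 * x + i - hh) * ln (IZR n))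
    by (apply sp_fact; [lra | lia | eqt chi zeta xi HN2]).
  assert (F6 : IZR n * ln (selfpow (1 / 2 - chi - zeta)) = xl (IZR (hh - x - i)) - IZR (hh - x - i) * ln (IZR n))
    by (apply sp_fact; [lra | lia | eqt chi zeta xi HN2]).
  assert (F7 : IZR n * ln (selfpow (1 / 2 - chi + 2 * zeta)) = xl (IZR (hh - x + 2 * i)) - IZR (hh - x + 2 * i) * ln (IZR n))
    by (apply sp_fact; [lra | lia | eqt chi zeta xi HN2]).
  assert (F8 : IZR n * ln (selfpow (2 * chi - 3 * zeta - 1 / 2)) = xl (IZR (2 * x - 3 * i - hh)) - IZR (2 * x - 3 * i - hh) * ln (IZR n))
    by (apply sp_fact; [lra | lia | eqt chi zeta xi HN2]).
  assert (G1 : IZR n * ln (selfpow xi) = xl (IZR j) - IZR j * ln (IZR n))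
    by (apply sp_fact; [lra | lia | eqt chi zeta xi HN2]).
  assert (G2 : IZR n * ln (selfpow (1 - 2 * chi - 2 * zeta - xi)) = xl (IZR (n - 2*i - 2*x - j)) - IZR (n - 2*i - 2*x - j) * ln (IZR n))
    by (apply sp_fact; [lra | lia | eqt chi zeta xi HN2]).
  assert (G3 : IZR n * ln (selfpow (1 - 2 * chi + 4 * zeta - xi)) = xl (IZR (n - 2*x + 4*i - j)) - IZR (n - 2*x + 4*i - j) * ln (IZR n))
    by (apply sp_fact; [lra | lia | eqt chi zeta xi HN2]).
  assert (G4 : IZR n * ln (selfpow (- (7 / 2) + 10 * chi - 5 * zeta + xi)) = xl (IZR (3 * (2 * x - hh - 3 * i) - 2 * (n - 2 * i - 2 * x) + j)) - IZR (3 * (2 * x - hh - 3 * i) - 2 * (n - 2 * i - 2 * x) + j) * ln (IZR n))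
    by (apply sp_fact; [lra | lia | eqt chi zeta xi HN2]).
  assert (R1 : IZR n * ln (Rpower 3 (1 / 2 - 4 * chi + 2 * zeta)) = (IZR hh - 4 * IZR x + 2 * IZR i) * ln 3)
    by (rewrite ln_Rpower; eqt chi zeta xi HN2).
  assert (R2 : IZR n * ln (Rpower 2 (1 - 2 * chi + zeta)) = (IZR n - 2 * IZR x + IZR i) * ln 2)
    by (rewrite ln_Rpower; eqt chi zeta xi HN2).
  assert (R3 : IZR n * ln (Rpower 2 (2 * xi)) = 2 * IZR j * ln 2)
    by (rewrite ln_Rpower; eqt chi zeta xi HN2).
  assert (R4 : IZR n * ln (Rpower phi_inv xi) = IZR j * ln phi_inv)
    by (rewrite ln_Rpower; eqt chi zeta xi HN2).
  pose proof (stirZ_up n n ltac:(lia) ltac:(lia)) as U1.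
  pose proof (stirZ_up (n - 2*i - 2*x) n ltac:(lia) ltac:(lia)) as U2.
  pose proof (stirZ_up (n - 2*x + 4*i) n ltac:(lia) ltac:(lia)) as U3.
  pose proof (stirZ_up (3 * (2 * x - hh - 3 * i)) n ltac:(lia) ltac:(lia)) as U4.
  pose proof (stirZ_up (3 * (2 * x - hh + i)) n ltac:(lia) ltac:(lia)) as U5.
  pose proof (stirZ_up (3 * hh) n ltac:(lia) ltac:(lia)) as U6.
  pose proof (stirZ_low (2 * x + i - hh) ltac:(lia)) as L1.
  pose proof (stirZ_low (hh - x - i) ltac:(lia)) as L2.
  pose proof (stirZ_low (2 * x - 3 * i - hh) ltac:(lia)) as L3.
  pose proof (stirZ_low (hh - x + 2 * i) ltac:(lia)) as L4.
  pose proof (stirZ_low j ltac:(lia)) as L5.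
  pose proof (stirZ_low (n - 2*i - 2*x - j) ltac:(lia)) as L6.
  pose proof (stirZ_low (n - 2*x + 4*i - j) ltac:(lia)) as L7.
  pose proof (stirZ_low (3 * (2 * x - hh - 3 * i) - 2 * (n - 2 * i - 2 * x) + j) ltac:(lia)) as L8.
  pose proof (stirZ_low (3 * n) ltac:(lia)) as L9.
  assert (Hl2 : ln (IZR n) = ln 2 + ln (IZR hh)) by (rewrite HN2, ln_mult; lra).
  assert (X1 : xl (IZR n) = IZR n * ln (IZR n)) by (unfold xl; destruct (Rle_dec (IZR n) 0); lra).
  assert (X2 : xl (IZR (3 * hh)) = IZR (3 * hh) * (ln 3 + ln (IZR hh))).
  { rewrite mult_IZR. unfold xl; destruct (Rle_dec (IZR 3 * IZR hh) 0); [lra|]. rewrite ln_mult; lra. }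
  assert (X3 : xl (IZR (3 * n)) = IZR (3 * n) * (ln 3 + ln (IZR n))).
  { rewrite mult_IZR. unfold xl; destruct (Rle_dec (IZR 3 * IZR n) 0); [lra|]. rewrite ln_mult; lra. }
  assert (L64 : ln 64 = 3 * ln 4).
  { replace 64 with (4 ^ 3) by ring. rewrite ln_pow by lra. simpl; ring. }
  unfold Lz in *. simpl (INR 3).
  izrall.
  clearbody chi zeta xi. rewrite HN2 in *. rewrite Hl2 in *.
  lra.
Qed.

Lemma div_le_compat A B N : 0 < N -> A <= B -> A / N <= B / N.
Proof. intros. unfold Rdiv. apply Rmult_le_compat_r; auto. left; apply Rinv_0_lt_compat; auto. Qed.

Lemma in_Omega_pt hh n x i j : n = (2*hh)%Z -> (1 <= hh)%Z ->
  454/1000 * IZR n < IZR x <= 45537/100000 * IZR n ->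
  (0 <= i <= hh - x)%Z -> (0 <= j <= n - 2*i - 2*x)%Z ->
  in_Omega (IZR x / IZR n) (IZR i / IZR n) (IZR j / IZR n).
Proof.
  intros Hn Hh Hx Hi Hj.
  assert (HN2 : IZR n = 2 * IZR hh) by (rewrite Hn, mult_IZR; reflexivity).
  assert (HH : 1 <= IZR hh) by (apply IZR_le; auto).
  assert (HN : 0 < IZR n) by lra.
  assert (Ii : 0 <= IZR i <= IZR hh - IZR x) by (rewrite <- minus_IZR; split; apply IZR_le; lia).
  assert (Jj : 0 <= IZR j <= IZR n - 2 * IZR i - 2 * IZR x).
  { replace (IZR n - 2 * IZR i - 2 * IZR x) with (IZR (n - 2*i - 2*x)) by (izr; reflexivity).
    split; apply IZR_le; lia. }
  unfold in_Omega. repeat split.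
  - replace (454/1000) with ((454/1000 * IZR n) / IZR n) by (field; lra).
    unfold Rdiv at 2. apply Rmult_lt_compat_r; [apply Rinv_0_lt_compat; lra| lra].
  - replace (45537/100000) with ((45537/100000 * IZR n) / IZR n) by (field; lra).
    apply div_le_compat; lra.
  - replace 0 with (0 / IZR n) by (field; lra). apply div_le_compat; lra.
  - replace (1/2 - IZR x / IZR n) with ((IZR hh - IZR x) / IZR n) by (rewrite HN2; field; lra).
    apply div_le_compat; lra.
  - replace 0 with (0 / IZR n) by (field; lra). apply div_le_compat; lra.
  - replace (1 - 2 * (IZR x / IZR n) - 2 * (IZR i / IZR n)) with ((IZR n - 2 * IZR i - 2 * IZR x) / IZR n) by (field; lra).
    apply div_le_compat; lra.
Qed.

Theorem lemma11 :
  exists K : R, 0 < K /\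
    forall (n x : Z), (0 < n)%Z -> Z.Even n ->
      454/1000 * IZR n < IZR x <= 45537/100000 * IZR n ->
      forall S : R, is_lub (hpow_set (Z.to_nat n)) S ->
        Rabs (q x n / INR (dfact (3 * Z.to_nat n - 1))) <= K * IZR n ^ 6 * S.
Proof.
  exists (64 * exp 6). split; [pos|].
  intros n x Hn0 [hh Hn] Hx S HS.
  assert (Hh : (1 <= hh)%Z) by lia.
  assert (HN2 : IZR n = 2 * IZR hh) by (rewrite Hn, mult_IZR; reflexivity).
  assert (HH : 1 <= IZR hh) by (apply IZR_le; auto).
  assert (HN : 0 < IZR n) by lra.
  assert (H1 : (4*hh < 5*x)%Z) by (apply lt_IZR; rewrite !mult_IZR; lra).
  assert (H2 : (x < hh)%Z) by (apply lt_IZR; lra).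
  assert (Hdiv : (n / 2 = hh)%Z) by (rewrite Hn, Z.mul_comm, Z.div_mul; lia).
  rewrite (dfact_Z n hh Hn Hh), q_eq, Hdiv.
  set (D := factZ (3 * n) / (powZ 2 (3 * hh) * factZ (3 * hh))).
  assert (HD : 0 < D) by (unfold D; pos).
  assert (Hmem : forall i j, (0 <= i <= hh - x)%Z -> (0 <= j <= n - 2*i - 2*x)%Z ->
     h_fun (IZR x / IZR n) (IZR i / IZR n) (IZR j / IZR n) ^ Z.to_nat n <= S).
  { intros i j Hi Hj. destruct HS as [Hub _]. apply Hub.
    exists (IZR x / IZR n), (IZR i / IZR n), (IZR j / IZR n). split; [|reflexivity].
    eapply in_Omega_pt; eauto. }
  assert (HS0 : 0 <= S).
  { eapply Rle_trans; [|apply (Hmem 0%Z 0%Z); lia]. left. apply pow_lt.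
    unfold h_fun, f_fun, g_fun; pos. }
  set (M := 64 * exp 6 * IZR n ^ 3 * S).
  assert (HM : 0 <= M) by (unfold M; apply Rmult_le_pos; [left; pos|auto]).
  assert (Hterm : forall i j, (0 <= i <= hh - x)%Z -> (0 <= j <= n - 2*i - 2*x)%Z ->
     termB hh x n i j * termA hh x n i <= M * D).
  { intros i j Hi Hj. pose proof (term_bound hh x n i j Hn Hh H1 H2 Hi Hj) as T.
    fold D in T. pose proof (Hmem i j Hi Hj).
    assert (termA hh x n i * termB hh x n i j / D <= M).
    { eapply Rle_trans; [exact T|]. unfold M. apply Rmult_le_compat_l; [left; pos|auto]. }
    apply (Rmult_le_compat_r D) in H0; [|lra].
    replace (termA hh x n i * termB hh x n i j / D * D) with (termA hh x n i * termB hh x n i j) in H0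
      by (field; lra). lra. }
  set (Q := sum_f_R0 _ _).
  assert (HQ0 : 0 <= Q).
  { apply cond_pos_sum. intros i0. apply Rmult_le_pos; [left; unfold termA; pos|].
    apply cond_pos_sum. intros j0. left; unfold termB; pos. }
  assert (HQ : Q <= M * D * IZR n * IZR n).
  { unfold Q. eapply Rle_trans.
    - apply sum_Rle with (Bn := fun _ => M * D * IZR n). intros i0 Hi0.
      rewrite scal_sum. eapply Rle_trans.
      + apply sum_Rle with (Bn := fun _ => M * D). intros j0 Hj0. apply Hterm.
        * assert (Z.of_nat i0 <= hh - x)%Z by lia. lia.
        * assert (Z.of_nat j0 <= n - 2 * Z.of_nat i0 - 2 * x)%Z by lia. lia.
      + rewrite sum_cte. apply Rmult_le_compat_l; [apply Rmult_le_pos; lra|].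
        rewrite S_INR, INR_toZ by lia. izr.
        assert (1 <= IZR x) by (apply IZR_le; lia). assert (0 <= INR i0) by apply pos_INR. 
        rewrite <- INR_IZR_INZ. lra.
    - rewrite sum_cte. apply Rmult_le_compat_l; [apply Rmult_le_pos; [apply Rmult_le_pos|]; lra|].
      rewrite S_INR, INR_toZ by lia. rewrite minus_IZR.
      assert (1 <= IZR x) by (apply IZR_le; lia). lra. }
  rewrite Rabs_pos_eq by (apply Rmult_le_pos; [auto| left; apply Rinv_0_lt_compat; auto]).
  apply Rmult_le_reg_r with D; auto.
  replace (Q / D * D) with Q by (field; lra).
  eapply Rle_trans; [exact HQ|]. unfold M.
  assert (1 <= IZR n) by lra.
  assert (0 <= 64 * exp 6 * S * D) by (apply Rmult_le_pos; [apply Rmult_le_pos; [apply Rmult_le_pos; [lra | left; apply exp_pos] | lra] | lra]).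
  replace (64 * exp 6 * IZR n ^ 3 * S * D * IZR n * IZR n) with ((64 * exp 6 * S * D) * IZR n ^ 5) by ring.
  replace (64 * exp 6 * IZR n ^ 6 * S * D) with ((64 * exp 6 * S * D) * IZR n ^ 5 * IZR n) by ring.
  assert (0 <= (64 * exp 6 * S * D) * IZR n ^ 5) by (apply Rmult_le_pos; [auto | apply pow_le; lra]).
  nra.
Qed.
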